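(* Suppose the polytope $P_o=\mathrm{conv}\{v_1,\dots,v_{d+1}\}\subseteq\mathbb{R}^d$ contains the Euclidean ball $B_{4d^8}(0)$. Then there exist $d+1$ integer points $g_1,\dots,g_{d+1}\in\mathbb{Z}^d\cap\frac{2}{d^2}P_o$ (where $\frac{2}{d^2}P_o=\{\frac{2}{d^2}p:p\in P_o\}$) such that: (1) if $(\lambda_1,\dots,\lambda_{d+1})\in\Delta^{d+1}$ satisfies $\sum_i\lambda_i v_i=0$, then there exists $(\lambda_1',\dots,\lambda_{d+1}')\in\Delta^{d+1}$ with $\sum_i\lambda_i' g_i=0$ and $\frac12\lambda_i'\le\lambda_i\le2\lambda_i'$ for all $i$; (2) for every $i\in[d+1]$ there exists $(\lambda^i_1,\dots,\lambda^i_{d+1})\in\Delta^{d+1}$ with $\lambda^i_i\ge\frac{1}{2d^2}$ and $$g_i=\lambda^i_i v_i+\sum_{j\ne i}\lambda^i_j g_j.$$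
   Context: $\Delta^{m}$ denotes the probability simplex $\{\lambda\in\mathbb{R}^m_{\ge0}:\sum_i\lambda_i=1\}$; $B_r(c)$ denotes the Euclidean ball of radius $r$ centered at $c$. *)

(* Defs.v *)
From mathcomp Require Import all_boot all_order all_algebra.
From mathcomp Require Import reals.
Set Implicit Arguments. Unset Strict Implicit. Unset Printing Implicit Defensive.
Import Order.TTheory GRing.Theory Num.Theory.
Local Open Scope ring_scope.

Definition in_simplex (R : realType) (m : nat) (lam : 'I_m -> R) : Prop :=
  (forall i, 0 <= lam i) /\ \sum_(i < m) lam i = 1.

Definition conv (R : realType) (d m : nat) (v : 'I_m -> 'rV[R]_d) : 'rV[R]_d -> Prop :=
  fun x => exists lam : 'I_m -> R, in_simplex lam /\ x = \sum_(i < m) lam i *: v i.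

Definition sqnorm (R : realType) (d : nat) (x : 'rV[R]_d) : R :=
  \sum_(j < d) x ord0 j ^+ 2.

Definition ball_euclid (R : realType) (d : nat) (c : 'rV[R]_d) (r : R) : 'rV[R]_d -> Prop :=
  fun x => 0 <= r /\ sqnorm (x - c) <= r ^+ 2.

Definition is_int_point (R : realType) (d : nat) (x : 'rV[R]_d) : Prop :=
  forall j, x ord0 j \is a Num.int.

Definition dilate (R : realType) (d : nat) (t : R) (P : 'rV[R]_d -> Prop) : 'rV[R]_d -> Prop :=
  fun x => exists p, P p /\ x = t *: p.

(* Main.v *)
Require Import Defs.
From mathcomp Require Import all_boot all_order all_algebra.
From mathcomp Require Import reals ring lra.
Import Order.TTheory GRing.Theory Num.Theory.
Local Open Scope ring_scope.

Lemma sum_coord {R : realType} {d n} (a : 'I_n -> R) (v : 'I_n -> 'rV[R]_d) k :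
  (\sum_i a i *: v i) ord0 k = \sum_i a i * v i ord0 k.
Proof. by rewrite summxE; apply: eq_bigr => i _; rewrite mxE. Qed.

Lemma indep (R : realType) d (v : 'I_d.+1 -> 'rV[R]_d) (r : R) : 0 < r ->
  (forall x, ball_euclid 0 r x -> conv v x) ->
  forall k : 'I_d.+1 -> R, \sum_j k j *: v j = 0 -> \sum_j k j = 0 -> forall j, k j = 0.
Proof.
move=> r0 H kk Hv Hs.
pose W : 'M[R]_d.+1 := \matrix_(j, k) (if unlift ord0 k is Some k' then v j ord0 k' else 1).
have key : forall w : 'rV[R]_d.+1, w *m W^T = 0 -> w = 0.
  move=> w Hw.
  have Hl j : w 0 ord0 + \sum_(k' < d) w 0 (lift ord0 k') * v j 0 k' = 0.
    move/rowP/(_ j): Hw; rewrite !mxE big_ord_recl.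
    rewrite /W !mxE unlift_none mulr1 => E; apply: eq_trans E; congr (_ + _).
    by apply: eq_bigr => k _; rewrite !mxE liftK.
  have ell x : conv v x -> w 0 ord0 + \sum_(k' < d) w 0 (lift ord0 k') * x 0 k' = 0.
    move=> [a [[a0 a1] ->]].
    under eq_bigr do rewrite sum_coord mulr_sumr.
    rewrite exchange_big /= -[w 0 ord0]mulr1 -a1 mulr_sumr -big_split /=.
    apply: big1 => j _.
    transitivity (a j * (w 0 ord0 + \sum_(k' < d) w 0 (lift ord0 k') * v j 0 k')); last by rewrite Hl mulr0.
    rewrite mulrDr mulr_sumr mulrC.
    by congr (_ + _); apply: eq_bigr => k _; rewrite mulrCA.
  have Hb0 : ball_euclid 0 r (0 : 'rV[R]_d).
    split; first exact: ltW.
    rewrite /sqnorm big1; last by move=> k _; rewrite !mxE subr0 expr0n.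
    by rewrite exprn_ge0 // ltW.
  have w0 : w 0 ord0 = 0.
    have := ell 0 (H 0 Hb0); rewrite big1 ?addr0 //.
    by move=> k _; rewrite mxE mulr0.
  have wk k' : w 0 (lift ord0 k') = 0.
    pose x : 'rV[R]_d := \row_k (if k == k' then r else 0).
    have Hx : ball_euclid 0 r x.
      split; first exact: ltW.
      rewrite /sqnorm (bigD1 k') //= big1 ?addr0; first by rewrite !mxE eqxx subr0.
      by move=> k /negbTE nk; rewrite !mxE nk subr0 expr0n.
    have := ell x (H x Hx); rewrite w0 add0r (bigD1 k') //= big1 ?addr0.
      by rewrite mxE eqxx => /eqP; rewrite mulf_eq0 (gt_eqF r0) orbF => /eqP.
    by move=> k /negbTE nk; rewrite mxE nk mulr0.
  by apply/rowP => k; rewrite mxE; case: (unliftP ord0 k) => [k'|] ->.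
have : W \in unitmx by rewrite -unitmx_tr -row_free_unit; apply: inj_row_free.
rewrite -row_free_unit => /row_free_inj inj.
have E : (\row_j kk j) *m W = 0 *m W.
  rewrite mul0mx; apply/rowP => k; rewrite !mxE.
  under eq_bigr do rewrite !mxE.
  case: (unliftP ord0 k) => [k' _|_] /=.
    by rewrite -(sum_coord kk v k') Hv mxE.
  by under eq_bigr do rewrite mulr1.
move=> j; have /rowP/(_ j) := inj _ _ _ E.
by rewrite !mxE.
Qed.


Lemma sqnormZ (R : realType) d (a : R) (x : 'rV[R]_d) : sqnorm (a *: x) = a ^+ 2 * sqnorm x.
Proof. rewrite /sqnorm mulr_sumr; apply: eq_bigr => k _; by rewrite mxE exprMn. Qed.

Lemma sqnormN (R : realType) d (x : 'rV[R]_d) : sqnorm (- x) = sqnorm x.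
Proof. rewrite /sqnorm; apply: eq_bigr => k _; by rewrite mxE sqrrN. Qed.

Lemma ball_rep (R : realType) d (v : 'I_d.+1 -> 'rV[R]_d) (r : R) (lam : 'I_d.+1 -> R) :
  0 < r -> (forall x, ball_euclid 0 r x -> conv v x) ->
  in_simplex lam -> \sum_j lam j *: v j = 0 ->
  forall s w, 0 < s -> sqnorm w <= (s * r) ^+ 2 ->
  exists c : 'I_d.+1 -> R, \sum_j c j *: v j = w /\ \sum_j c j = 0 /\
    forall j, - (s * lam j) <= c j.
Proof.
move=> r0 H [l0 l1] lv s w s0 hw.
have [a [[a0 a1] ya]] : conv v (s^-1 *: w).
  apply: H; split; first exact: ltW.
  rewrite subr0 sqnormZ -(ler_pM2l (exprn_gt0 2 s0)) mulrA -exprMn mulfV ?gt_eqF //.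
  by rewrite expr1n mul1r -exprMn.
exists (fun j => s * (a j - lam j)); split; last split.
- under eq_bigr do rewrite -scalerA scalerBl.
  rewrite -scaler_sumr sumrB -ya lv subr0 scalerA mulfV ?gt_eqF // scale1r //.
- by rewrite -mulr_sumr sumrB a1 l1 subrr mulr0.
- by move=> j; have := mulr_ge0 (ltW s0) (a0 j); rewrite mulrBr; lra.
Qed.

Lemma ball_rep2 (R : realType) d (v : 'I_d.+1 -> 'rV[R]_d) (r : R) (lam : 'I_d.+1 -> R) :
  0 < r -> (forall x, ball_euclid 0 r x -> conv v x) ->
  in_simplex lam -> \sum_j lam j *: v j = 0 ->
  forall s w, 0 < s -> sqnorm w <= (s * r) ^+ 2 ->
  exists c : 'I_d.+1 -> R, \sum_j c j *: v j = w /\ \sum_j c j = 0 /\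
    forall j, `|c j| <= s * lam j.
Proof.
move=> r0 H hl lv s w s0 hw.
have [c [cv [cs cl]]] := @ball_rep R d v r lam r0 H hl lv s w s0 hw.
have hw' : sqnorm (- w) <= (s * r) ^+ 2 by rewrite sqnormN.
have [c' [cv' [cs' cl']]] := @ball_rep R d v r lam r0 H hl lv s (- w) s0 hw'.
have E := @indep R d v r r0 H (fun j => c j + c' j).
have /E E' : \sum_j (c j + c' j) *: v j = 0.
  by under eq_bigr do rewrite scalerDl; rewrite big_split /= cv cv' subrr.
have /E' {}E : \sum_j (c j + c' j) = 0 by rewrite big_split /= cs cs' addr0.
exists c; split=> //; split=> // j.
have := E j; have := cl j; have := cl' j; rewrite ler_norml; lra.
Qed.


Definition betaf (R : realType) n (t : R) (lam : 'I_n -> R) (c : 'I_n -> 'I_n -> R) j k :=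
  t * (j == k)%:R + (1 - t) * lam k + c j k.
Arguments betaf {R n}.

Lemma sum_delta {R : realType} {n} (f : 'I_n -> R) k :
  \sum_j f j * (j == k)%:R = f k.
Proof.
rewrite (bigD1 k) //= eqxx mulr1 big1 ?addr0 // => j /negbTE ->; by rewrite mulr0.
Qed.

Lemma sum_delta' {R : realType} {n} (f : 'I_n -> R) j :
  \sum_k f k * (j == k)%:R = f j.
Proof.
rewrite (bigD1 j) //= eqxx mulr1 big1 ?addr0 // => k; rewrite eq_sym => /negbTE ->; by rewrite mulr0.
Qed.

Lemma beta_expand (R : realType) n (t : R) (lam : 'I_n -> R) (c : 'I_n -> 'I_n -> R) (b : 'I_n -> R) k :
  \sum_j b j * betaf t lam c j k = t * b k + (1 - t) * lam k * \sum_j b j + \sum_j b j * c j k.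
Proof.
rewrite /betaf.
under eq_bigr do rewrite !mulrDr.
rewrite !big_split /= mulr_sumr.
congr (_ + _ + _); last by apply: eq_bigr => j _; ring.
rewrite -(sum_delta (fun j => t * b j)); apply: eq_bigr => j _; ring.
Qed.

Lemma beta_rowsum (R : realType) n (t : R) (lam : 'I_n -> R) (c : 'I_n -> 'I_n -> R) j :
  \sum_k lam k = 1 -> \sum_k c j k = 0 -> \sum_k betaf t lam c j k = 1.
Proof.
move=> l1 c0; rewrite /betaf !big_split /= -[\sum_(i < n) (1 - t) * lam i]mulr_sumr l1 c0.
have := sum_delta' (fun _ => t) j; rewrite /= => ->; rewrite mulr1 addr0; ring.
Qed.

Lemma Xbound {R : realType} {n} (s : R) (lam : 'I_n -> R) (c : 'I_n -> 'I_n -> R) (b : 'I_n -> R) k :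
  (forall j k, `|c j k| <= s * lam k) ->
  `|\sum_j b j * c j k| <= s * lam k * \sum_j `|b j|.
Proof.
move=> hc; apply: le_trans (ler_norm_sum _ _ _) _.
rewrite mulr_sumr; apply: ler_sum => j _; rewrite normrM mulrC.
by apply: ler_wpM2r => //.
Qed.

Lemma beta_solve {R : realType} {n} (t s : R) (lam : 'I_n -> R) (c : 'I_n -> 'I_n -> R) :
  0 < s -> s < t -> (forall k, 0 <= lam k) -> \sum_k lam k = 1 ->
  (forall j, \sum_k c j k = 0) -> (forall j k, `|c j k| <= s * lam k) ->
  forall tau : 'I_n -> R, exists b : 'I_n -> R, forall k, \sum_j b j * betaf t lam c j k = tau k.
Proof.
move=> s0 st l0 l1 c0 hc tau.
pose M : 'M[R]_n := \matrix_(j, k) betaf t lam c j k.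
have inj : forall u : 'rV[R]_n, u *m M = 0 -> u = 0.
  move=> u Hu.
  have Hk k : \sum_j u 0 j * betaf t lam c j k = 0.
    by move/rowP/(_ k): Hu; rewrite !mxE => E; apply: eq_trans E; apply: eq_bigr => j _; rewrite mxE.
  have Su : \sum_j u 0 j = 0.
    have : \sum_k \sum_j u 0 j * betaf t lam c j k = 0 by rewrite big1.
    rewrite exchange_big /=.
    under eq_bigr do rewrite -mulr_sumr beta_rowsum // mulr1.
    by [].
  have Hk' k : t * `|u 0 k| <= s * lam k * \sum_j `|u 0 j|.
    have := Hk k; rewrite beta_expand Su mulr0 addr0 => E.
    have -> : t * `|u 0 k| = `|\sum_j u 0 j * c j k|.
      rewrite -(ger0_norm (ltW (lt_trans s0 st))) -normrM -normrN; congr `|_|.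
      by apply/eqP; rewrite eq_sym -addr_eq0 addrC E.
    exact: Xbound.
  have S0 : \sum_j `|u 0 j| = 0.
    have : t * \sum_j `|u 0 j| <= s * \sum_j `|u 0 j|.
      rewrite mulr_sumr; apply: le_trans (ler_sum _ (fun k _ => Hk' k)) _.
      by rewrite -mulr_suml -mulr_sumr l1 mulr1.
    have : 0 <= \sum_j `|u 0 j| by apply: sumr_ge0 => j _.
    set S := \sum_j _; move=> h1 h2; have h3 : (t - s) * S <= 0 by lra.
    apply/le_anti; rewrite h1 andbT; rewrite pmulr_rle0 in h3 => //; lra.
  apply/rowP => k; rewrite mxE; apply/normr0_eq0.
  have := Hk' k; rewrite S0 mulr0 => h.
  have := normr_ge0 (u 0 k); nra.
have : M \in unitmx by rewrite -row_free_unit; apply: inj_row_free.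
move=> Mu.
exists (fun j => ((\row_k tau k) *m invmx M) 0 j) => k.
have := mulmxKV Mu (\row_k tau k) => /rowP/(_ k); rewrite !mxE => E.
apply: eq_trans E; apply: eq_bigr => j _; congr (_ * _); by rewrite /M mxE.
Qed.

Lemma le_sum1 {R : realType} {n} (lam : 'I_n -> R) k :
  (forall k, 0 <= lam k) -> \sum_k lam k = 1 -> lam k <= 1.
Proof.
move=> l0 l1; rewrite -l1 (bigD1 k) //= lerDl; exact: sumr_ge0.
Qed.

Section Sol.
Variables (R : realType) (n : nat) (t s : R) (lam : 'I_n -> R) (c : 'I_n -> 'I_n -> R).
Hypotheses (s0 : 0 < s) (st7 : s * (7 - 3 * t) <= t) (t23 : t <= 2/3) (st2 : 2 * s < t ^+ 2)
  (l0 : forall k, 0 <= lam k) (l1 : \sum_k lam k = 1)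
  (c0 : forall j, \sum_k c j k = 0) (hc : forall j k, `|c j k| <= s * lam k).

Lemma sol_sum {b tau : 'I_n -> R} :
  (forall k, \sum_j b j * betaf t lam c j k = tau k) -> \sum_j b j = \sum_k tau k.
Proof.
move=> hb; under [RHS]eq_bigr do rewrite -hb.
rewrite exchange_big /=; apply: eq_bigr => j _.
by rewrite -mulr_sumr beta_rowsum // mulr1.
Qed.

Lemma sol_eq {b tau : 'I_n -> R} k :
  (forall k, \sum_j b j * betaf t lam c j k = tau k) -> \sum_k tau k = 1 ->
  t * b k = tau k - (1 - t) * lam k - \sum_j b j * c j k.
Proof.
move=> hb ht; have := hb k; rewrite beta_expand (sol_sum hb) ht mulr1 => <-; ring.
Qed.

Lemma sol_vertex (b : 'I_n -> R) i :
  (forall k, \sum_j b j * betaf t lam c j k = (i == k)%:R) ->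
  [/\ \sum_j b j = 1, 0 < t * b i, t * b i <= 4/3 & forall j, j != i -> b j <= 0].
Proof.
move=> hb; have H1 := s0; have H2 := st7; have H3 := t23; have H4 := st2.
have H5 : 5 * s <= t.
  have : s * t <= s * (2/3) by apply: ler_wpM2l => //; lra.
  lra.
have tp : 0 < t by lra.
have ht : \sum_k ((i == k)%:R : R) = 1.
  by have := sum_delta' (fun _ => (1 : R)) i; under eq_bigr do rewrite mul1r.
have Sb : \sum_j b j = 1 by rewrite (sol_sum hb) ht.
move SE : (\sum_j `|b j|) => S.
have S0 : 0 <= S by rewrite -SE; apply: sumr_ge0.
have X k := Xbound s lam c b k hc.
have E k := sol_eq k hb ht.
have hS : t * S <= 2 - t + s * S.
  have h k : t * `|b k| <= (i == k)%:R + (1 - t) * lam k + s * lam k * S.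
    have tb : `|t * b k| <= (i == k)%:R + (1 - t) * lam k + s * lam k * S.
      rewrite E ler_norml; have := X k; rewrite SE ler_norml => /andP [x1 x2].
      have d0 : 0 <= ((i == k)%:R : R) by case: (i == k).
      have := l0 k => l0k.
      have q : 0 <= (1 - t) * lam k by apply: mulr_ge0 => //; lra.
      apply/andP; split; lra.
    by rewrite normrM gtr0_norm in tb.
  rewrite -[in t * S]SE mulr_sumr; apply: le_trans (ler_sum _ (fun k _ => h k)) _.
  rewrite !big_split /= ht -!mulr_sumr -!mulr_suml -mulr_sumr l1; lra.
have P1 : 3 * (s * S) <= 1.
  have h1 : (t - s) * S <= 2 - t by lra.
  have h3 : 0 < t - s by lra.
  have h2 : 3 * s * ((t - s) * S) <= 3 * s * (2 - t) by apply: ler_wpM2l => //; lra.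
  nra.
have P2 : s * S < t.
  have h1 : (t - s) * S <= 2 - t by lra.
  have h2 : s * ((t - s) * S) <= s * (2 - t) by apply: ler_wpM2l => //; lra.
  have h3 : 0 < t - s by lra.
  nra.
have sS0 : 0 <= s * S by apply: mulr_ge0 => //; lra.
split => //.
- have := E i; rewrite eqxx /= => ->.
  have := X i; rewrite SE ler_norml => /andP [_ h]. have := le_sum1 lam i l0 l1.
  have := l0 i => a bb.
  have h1 : 0 <= (1 - lam i) * (1 - (t - s * S)) by apply: mulr_ge0; lra.
  have h2 : 0 <= lam i * (t - s * S) by apply: mulr_ge0; lra.
  lra.
- have := E i; rewrite eqxx /= => ->.
  have := X i; rewrite SE ler_norml => /andP [h _]. have := le_sum1 lam i l0 l1.
  have := l0 i => a bb.
  have h1 : 0 <= (1 - lam i) * (s * S) by apply: mulr_ge0; lra.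
  have h2 : 0 <= (1 - t) * lam i by apply: mulr_ge0; lra.
  lra.
- move=> j /negbTE ji; have := E j; rewrite eq_sym ji => Ej.
  have : t * b j <= 0.
    rewrite Ej /=; have := X j; rewrite SE ler_norml => /andP [h _]. have := l0 j => a.
    have h1 : 0 <= lam j * (1 - t - s * S) by apply: mulr_ge0; lra.
    lra.
  by rewrite pmulr_rle0.
Qed.

Lemma sol_center (b : 'I_n -> R) :
  (forall k, \sum_j b j * betaf t lam c j k = lam k) ->
  \sum_j b j = 1 /\ forall k, 0 <= b k /\ b k / 2 <= lam k /\ lam k <= 2 * b k.
Proof.
move=> hb; have H1 := s0; have H2 := st7; have H3 := t23; have H4 := st2.
have H5 : 5 * s <= t.
  have : s * t <= s * (2/3) by apply: ler_wpM2l => //; lra.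
  lra.
have Sb : \sum_j b j = 1 by rewrite (sol_sum hb) l1.
split => //.
move SE : (\sum_j `|b j|) => S.
have S0 : 0 <= S by rewrite -SE; apply: sumr_ge0.
have X k := Xbound s lam c b k hc.
have E k := sol_eq k hb l1.
have tp : 0 < t by lra.
have hS : t * S <= t + s * S.
  have h k : t * `|b k| <= t * lam k + s * lam k * S.
    have tb : `|t * b k| <= t * lam k + s * lam k * S.
      rewrite E ler_norml; have := X k; rewrite SE ler_norml => /andP [x1 x2].
      have := l0 k => l0k.
      have := mulr_ge0 (ltW tp) l0k => tl. apply/andP; split; lra.
    by rewrite normrM gtr0_norm in tb.
  rewrite -[in t * S]SE mulr_sumr; apply: le_trans (ler_sum _ (fun k _ => h k)) _.
  rewrite !big_split /= -!mulr_sumr -!mulr_suml -mulr_sumr l1; lra.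
have P1 : 2 * (s * S) <= t.
  have h1 : (t - s) * S <= t by lra.
  have h3 : 0 < t - s by lra.
  have h2 : s * ((t - s) * S) <= s * t by apply: ler_wpM2l => //; lra.
  nra.
move=> k; have := E k; have := X k; rewrite SE ler_norml => /andP [h1 h2] Ek.
have := l0 k; nra.
Qed.

End Sol.


Lemma params (R : realType) (D : R) : 1 <= D ->
  let t := 2 / D ^+ 2 / 3 in let s := (D ^+ 7)^-1 / 8 in
  [/\ 0 < s, s * (7 - 3 * t) <= t, t <= 2/3, 2 * s < t ^+ 2 & s * (4 * D ^+ 8) = D / 2].
Proof.
move=> D1 t s.
have D0 : 0 < D by lra.
have Dn0 : D != 0 by rewrite gt_eqF.
set x := D^-1.
have x0 : 0 < x by rewrite invr_gt0.
have x1 : x <= 1 by rewrite invr_le1 // ?unitfE.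
have te : t = 2 / 3 * x ^+ 2 by rewrite /t /x exprVn; field; rewrite ?expf_neq0.
have se : s = x ^+ 7 / 8 by rewrite /s /x exprVn.
have e5 : x ^+ 5 <= 1 by apply: exprn_ile1; lra.
have e3 : x ^+ 3 <= 1 by apply: exprn_ile1; lra.
have p2 : 0 < x ^+ 2 by apply: exprn_gt0.
have p4 : 0 < x ^+ 4 by apply: exprn_gt0.
have h7 : x ^+ 7 <= x ^+ 2 by rewrite (_ : 7 = 2 + 5)%N // exprD ler_piMr // ltW.
have h7' : x ^+ 7 <= x ^+ 4 by rewrite (_ : 7 = 4 + 3)%N // exprD ler_piMr // ltW.
have e4 : x ^+ 4 = x ^+ 2 * x ^+ 2 by rewrite -exprD.
split.
- by rewrite se divr_gt0 // exprn_gt0.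
- have h52 : x ^+ 5 <= x ^+ 2 by rewrite (_ : 5 = 2 + 3)%N // exprD ler_piMr // ltW.
  have q2 : x ^+ 2 <= 1 by apply: exprn_ile1; lra.
  have h57 : x ^+ 5 * (1 - x ^+ 2) <= 1 - x ^+ 2 by apply: ler_piMl => //; lra.
  have inner : 21 * x ^+ 5 - 6 * x ^+ 7 <= 16.
    have -> : x ^+ 7 = x ^+ 5 * x ^+ 2 by rewrite -exprD.
    lra.
  rewrite se te (_ : x ^+ 7 / 8 * (7 - 3 * (2 / 3 * x ^+ 2)) = x ^+ 2 * ((21 * x ^+ 5 - 6 * x ^+ 7) / 24)); last by field.
  rewrite (_ : 2 / 3 * x ^+ 2 = x ^+ 2 * (16 / 24)); last by field.
  apply: ler_wpM2l; [exact: ltW | lra].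
- rewrite te; have : x ^+ 2 <= 1 by apply: exprn_ile1; lra. lra.
- rewrite se te (_ : (2 / 3 * x ^+ 2) ^+ 2 = 4/9 * x ^+ 4); last by field.
  lra.
- by rewrite /s; field.
Qed.

Lemma powle (R : realType) (D : R) m n : 1 <= D -> (m <= n)%N -> D ^+ m <= D ^+ n.
Proof. move=> D1 mn; rewrite -(subnKC mn) exprD ler_peMr ?exprn_ege1 // exprn_ge0 //. by apply: le_trans D1. Qed.


Lemma conv_comb (R : realType) d n (v : 'I_n -> 'rV[R]_d) (a : R) x y :
  0 <= a <= 1 -> conv v x -> conv v y -> conv v (a *: x + (1 - a) *: y).
Proof.
move=> /andP [a0 a1] [lx [[lx0 lx1] ->]] [ly [[ly0 ly1] ->]].
exists (fun i => a * lx i + (1 - a) * ly i); split; first split.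
- move=> i; apply: addr_ge0; apply: mulr_ge0 => //; lra.
- by rewrite big_split /= -!mulr_sumr lx1 ly1; ring.
- rewrite !scaler_sumr -big_split /=; apply: eq_bigr => i _.
  by rewrite !scalerA -scalerDl.
Qed.

Lemma conv_vert (R : realType) d n (v : 'I_n -> 'rV[R]_d) i : conv v (v i).
Proof.
exists (fun j => (j == i)%:R); split; first split.
- by move=> j; case: (j == i).
- have := sum_delta (fun _ => (1 : R)) i; by under eq_bigr do rewrite mul1r.
- rewrite (bigD1 i) //= eqxx scale1r big1 ?addr0 // => j /negbTE ->; by rewrite scale0r.
Qed.

Theorem mainTheorem6 (R : realType) (d : nat) (v : 'I_d.+1 -> 'rV[R]_d) :
  (forall x, ball_euclid 0 (4 * d%:R ^+ 8) x -> conv v x) ->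
  exists g : 'I_d.+1 -> 'rV[R]_d,
    (forall i, is_int_point (g i) /\ dilate (2 / d%:R ^+ 2) (conv v) (g i)) /\
    (forall lam : 'I_d.+1 -> R, in_simplex lam ->
       \sum_(i < d.+1) lam i *: v i = 0 ->
       exists lam' : 'I_d.+1 -> R, in_simplex lam' /\
         \sum_(i < d.+1) lam' i *: g i = 0 /\
         (forall i, lam' i / 2 <= lam i /\ lam i <= 2 * lam' i)) /\
    (forall i : 'I_d.+1, exists mu : 'I_d.+1 -> R, in_simplex mu /\
       1 / (2 * d%:R ^+ 2) <= mu i /\
       g i = mu i *: v i + \sum_(j < d.+1 | j != i) mu j *: g j).
Proof.
case: d v => [|d] v H.
  exists v; split; [|split].
  - move=> i; split; first by case.
    exists (v i); split; first exact: conv_vert.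
    by apply/rowP => -[].
  - move=> lam [l0 l1] _; exists lam; split=> //; split; first by apply/rowP => -[].
    by move=> i; have := l0 i; lra.
  - move=> i; exists (fun _ => 1); split; first by split=> //; rewrite big_ord1.
    split; last by apply/rowP => -[].
    by rewrite expr0n /= mulr0 invr0 mulr0.
set D : R := (d.+1)%:R.
have D1 : 1 <= D by rewrite /D ler1n.
have D0 : 0 < D by lra.
pose t : R := 2 / D ^+ 2 / 3.
pose s : R := (D ^+ 7)^-1 / 8.
have [s0 st7 t23 st2 sr] : [/\ 0 < s, s * (7 - 3 * t) <= t, t <= 2/3, 2 * s < t ^+ 2 &
   s * (4 * D ^+ 8) = D / 2] by exact: params D1.
have t0 : 0 < t by rewrite /t !divr_gt0 // exprn_gt0.
have st : s < t.
  have : s * t <= s * (2/3) by apply: ler_wpM2l => //; lra.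
  lra.
set r := 4 * D ^+ 8.
have r0 : 0 < r by rewrite /r mulr_gt0 // exprn_gt0.
have hb0 : ball_euclid 0 r (0 : 'rV[R]_d.+1).
  split; first exact: ltW.
  rewrite /sqnorm big1; last by move=> k _; rewrite !mxE subr0 expr0n.
  by rewrite exprn_ge0 // ltW.
have [lam0 [hl0 lv0]] := H 0 hb0.
have lv0' : \sum_j lam0 j *: v j = 0 by rewrite -lv0.
pose g j : 'rV[R]_d.+1 := \row_k ((Num.floor (t * v j 0 k + 2^-1))%:~R : R).
pose e j := g j - t *: v j.
have he j k : `|e j 0 k| <= 2^-1.
  rewrite !mxE; set y := t * v j 0 k.
  have := floor_le (y + 2^-1); have := floorD1_gt (y + 2^-1); rewrite intrD.
  rewrite ler_norml; move=> h1 h2; apply/andP; split; lra.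
have hse j : sqnorm (e j) <= D ^+ 2 / 4.
  apply: le_trans (_ : \sum_(k < d.+1) (4^-1 : R) <= _).
    apply: ler_sum => k _; idtac.
    have := he j k; rewrite ler_norml => /andP [h1 h2]; nra.
  rewrite sumr_const card_ord -mulr_natr -/D.
  have : D <= D ^+ 2 by rewrite expr2 ler_peMl //; lra.
  lra.
have hse' j : sqnorm (e j) <= (s * r) ^+ 2.
  by rewrite /r sr; apply: le_trans (hse j) _; rewrite expr_div_n; lra.
have [c hc] := fin_all_exists (fun j => @ball_rep2 R d.+1 v r lam0 r0 H hl0 lv0' s (e j) s0 (hse' j)).
have l0 := hl0.1; have l1 := hl0.2.
have c0 j : \sum_k c j k = 0 by case: (hc j) => _ [].
have hcb j k : `|c j k| <= s * lam0 k by case: (hc j) => _ [_]; apply.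
have hg j : g j = \sum_k betaf t lam0 c j k *: v k.
  rewrite /betaf; under eq_bigr do rewrite !scalerDl.
  rewrite !big_split /=.
  have -> : \sum_k (t * (j == k)%:R) *: v k = t *: v j.
    rewrite (bigD1 j) //= eqxx mulr1 big1 ?addr0 // => k; rewrite eq_sym => /negbTE ->.
    by rewrite mulr0 scale0r.
  under [X in _ + X + _]eq_bigr do rewrite -scalerA.
  rewrite -scaler_sumr lv0' scaler0 addr0.
  case: (hc j) => -> _; by rewrite /e addrC subrK.
have comb (b tau : 'I_d.+2 -> R) : (forall k, \sum_j b j * betaf t lam0 c j k = tau k) ->
    \sum_j b j *: g j = \sum_k tau k *: v k.
  move=> hb; under eq_bigr do rewrite hg scaler_sumr.
  rewrite exchange_big /=; apply: eq_bigr => k _.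
  rewrite -hb scaler_suml; apply: eq_bigr => j _; by rewrite scalerA.
exists g; split; [|split].
- move=> i; split.
    by move=> k; rewrite mxE; exact: intr_int.
  exists ((1/3) *: v i + (2/3) *: ((3 * D ^+ 2 / 4) *: e i)); split.
    have -> : (2 / 3 : R) = 1 - 1/3 by field.
    apply: conv_comb; first (apply/andP; split; lra).
      exact: conv_vert.
    apply: H; split; first exact: ltW.
    rewrite subr0 sqnormZ; apply: le_trans (ler_wpM2l (exprn_ge0 _ _) (hse i)) _.
      by apply: divr_ge0; [apply: mulr_ge0 => //; apply: exprn_ge0|]; lra.
    have p36 : D ^+ 6 <= D ^+ 16 by apply: powle.
    have p6 : 1 <= D ^+ 6 by apply: exprn_ege1.
    rewrite /r (_ : (3 * D ^+ 2 / 4) ^+ 2 * (D ^+ 2 / 4) = 9/64 * D ^+ 6); last by field.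
    rewrite (_ : (4 * D ^+ 8) ^+ 2 = 16 * D ^+ 16); last by ring.
    lra.
  rewrite scalerDr !scalerA.
  have Dn0 : D != 0 by rewrite gt_eqF.
  have -> : 2 / D ^+ 2 * (1 / 3) = t by rewrite /t; field; rewrite addrC natr1 pnatr_eq0.
  have -> : 2 / D ^+ 2 * (2 / 3) * (3 * D ^+ 2 / 4) = 1 by field; rewrite addrC natr1 pnatr_eq0.
  by rewrite scale1r /e addrC subrK.
- move=> lam hl hlv.
  have elam k : lam k = lam0 k.
    have := @indep R d.+1 v r r0 H (fun j => lam j - lam0 j).
    have E1 : \sum_j (lam j - lam0 j) *: v j = 0.
      by under eq_bigr do rewrite scalerBl; rewrite sumrB hlv lv0' subrr.
    have E2 : \sum_j (lam j - lam0 j) = 0 by rewrite sumrB hl.2 l1 subrr.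
    by move=> /(_ E1 E2 k) /eqP; rewrite subr_eq0 => /eqP.
  have [b hb] := beta_solve t s lam0 c s0 st l0 l1 c0 hcb lam0.
  have [Sb hbk] := sol_center R d.+2 t s lam0 c s0 st7 t23 st2 l0 l1 c0 hcb b hb.
  exists b; split; first by split=> // k; case: (hbk k).
  split; first by rewrite (comb _ _ hb) lv0'.
  by move=> k; rewrite elam; case: (hbk k) => _.
move=> i.
have [b hb] := beta_solve t s lam0 c s0 st l0 l1 c0 hcb (fun k => (i == k)%:R).
have [Sb bi0 bi43 bj] := sol_vertex R d.+2 t s lam0 c s0 st7 t23 st2 l0 l1 c0 hcb b i hb.
have vi : \sum_j b j *: g j = v i.
  rewrite (comb _ _ hb) (bigD1 i) //= eqxx scale1r big1 ?addr0 //.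
  by move=> j /negbTE ji; rewrite eq_sym ji scale0r.
have bi : 0 < b i by rewrite -(pmulr_rgt0 _ t0).
have bin0 : b i != 0 by rewrite gt_eqF.
have Sj : \sum_(j < d.+2 | j != i) b j = 1 - b i.
  by rewrite -Sb [in RHS](bigD1 i) //= addrAC subrr add0r.
exists (fun j => if j == i then (b i)^-1 else - b j / b i); split; [split|split].
- move=> j; case: eqP => [_|/eqP ji]; first by rewrite invr_ge0 ltW.
  by rewrite divr_ge0 // ?oppr_ge0 ?bj // ltW.
- rewrite (bigD1 i) //= eqxx.
  rewrite (eq_bigr (fun j => - b j / b i)); last by move=> j /negbTE ->.
  by rewrite -mulr_suml sumrN Sj; field.
- rewrite eqxx div1r lef_pV2 ?posrE //; last by rewrite mulr_gt0 // exprn_gt0.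
  rewrite -(ler_pM2l t0) (_ : t * (2 * D ^+ 2) = 4/3) //.
  by rewrite /t; field; rewrite addrC natr1 pnatr_eq0.
- rewrite eqxx (eq_bigr (fun j => (- b j / b i) *: g j)); last by move=> j /negbTE ->.
  rewrite -vi (bigD1 i) //= scalerDr scalerA mulVf // scale1r scaler_sumr -addrA -big_split /=.
  rewrite big1 ?addr0 // => j _.
  by rewrite scalerA -scalerDl (_ : _ + _ = 0) ?scale0r //; field.
Qed.
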